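(* Let $n\ge 3$ and let $\gamma,\delta\in\mathbb{R}$ be arbitrary. Define $P(\rho) = -\frac{2n+\delta}{n(n-1)} + \frac{(\delta-\gamma)\rho}{n(n+1)} + \frac{\gamma\rho^2}{(n+1)(n+2)}$, $\alpha = -1 - \frac{\delta}{n(n+1)} - \frac{\gamma}{(n+1)(n+2)}$, $\beta = \frac{n+1}{n-1} + \frac{\delta}{n(n-1)} + \frac{\gamma}{n(n+1)}$, and $Q(\rho) = \rho^{n-1} - \rho^n - \rho^nP(\rho) - \alpha - \beta\rho$. Then: (1) the polynomial $\rho^{n+1} - \rho^n + \rho^nP(\rho) + \alpha + \beta\rho$ has a zero of order at least $3$ at $\rho=1$; (2) $Q(1) = Q'(1) = 0$ and $Q''(1) = 2$; in particular $Q$ has a zero of order exactly $2$ at $\rho=1$. In particular, $\rho=1$ is a removable singularity of the rational function $h''(\rho) = \frac{\rho^{n+1} - \rho^n + \rho^nP(\rho) + \alpha + \beta\rho}{(1-\rho)\rho\,Q(\rho)}$. *)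

(* Defs.v *)
From mathcomp Require Import all_boot all_order all_algebra.
Set Implicit Arguments. Unset Strict Implicit. Unset Printing Implicit Defensive.
Import Order.TTheory GRing.Theory Num.Theory.
Local Open Scope ring_scope.

Section Defs.
Variables (R : realFieldType) (n : nat) (gamma delta : R).

Definition nR : R := n%:R.

Definition Ppoly : {poly R} :=
  (- ((2 * nR + delta) / (nR * (nR - 1))))%:P
  + ((delta - gamma) / (nR * (nR + 1)))%:P * 'X
  + (gamma / ((nR + 1) * (nR + 2)))%:P * 'X ^+ 2.

Definition alpha : R :=
  - 1 - delta / (nR * (nR + 1)) - gamma / ((nR + 1) * (nR + 2)).

Definition beta : R :=
  (nR + 1) / (nR - 1) + delta / (nR * (nR - 1)) + gamma / (nR * (nR + 1)).

Definition Qpoly : {poly R} :=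
  'X ^+ n.-1 - 'X ^+ n - 'X ^+ n * Ppoly - alpha%:P - beta *: 'X.

Definition Npoly : {poly R} :=
  'X ^+ n.+1 - 'X ^+ n + 'X ^+ n * Ppoly + alpha%:P + beta *: 'X.

Definition Dpoly : {poly R} := (1 - 'X) * 'X * Qpoly.

End Defs.

(* Main.v *)
Require Import Defs.
From mathcomp Require Import all_boot all_order all_algebra.
From mathcomp Require Import ring lra.
Import Order.TTheory GRing.Theory Num.Theory.
Local Open Scope ring_scope.
Section S.
Variable R : realFieldType.
Implicit Types p r : {poly R}.
Lemma der2 r : ((r * ('X-1)^+2)^`(2)).[1] = 2 * r.[1].
Proof.
rewrite !derivnS derivn0 !(derivM, derivD, derivN, derivX, derivC, expr2, derivB).
rewrite -?polyC1 !(hornerD, hornerN, hornerM, hornerX, hornerC, horner_exp, hornerMn, hornerZ, horner0) subrr !(mulr0, mul0r, addr0, add0r, subr0, mulr1, mul1r, oppr0). ring.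
Qed.
Lemma der3a r : ((r * ('X-1)^+3)^`(2)).[1] = 0.
Proof.
rewrite !derivnS derivn0 !exprS expr0 !(derivM, derivD, derivN, derivX, derivC, derivB).
rewrite -?polyC1 !(hornerD, hornerN, hornerM, hornerX, hornerC, horner_exp, hornerMn, hornerZ, horner0) subrr !(mulr0, mul0r, addr0, add0r, subr0, mulr1, mul1r, oppr0); ring.
Qed.
Lemma der1 r : ((r * ('X-1))^`()).[1] = r.[1].
Proof.
rewrite !(derivM, derivD, derivN, derivX, derivC, derivB).
rewrite -?polyC1 !(hornerD, hornerN, hornerM, hornerX, hornerC, horner_exp, hornerMn, hornerZ, horner0) subrr !(mulr0, mul0r, addr0, add0r, subr0, mulr1, mul1r, oppr0); ring.
Qed.
Lemma root3 p : p.[1] = 0 -> (p^`()).[1] = 0 -> (p^`(2)).[1] = 0 -> ('X-1)^+3 %| p.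
Proof.
move=> h0 h1 h2.
have /factor_theorem [q hq] : root p 1 by apply/rootP.
rewrite polyC1 in hq; subst p.
rewrite der1 in h1.
have /factor_theorem [s hs] : root q 1 by apply/rootP.
rewrite polyC1 in hs; subst q.
rewrite -mulrA -expr2 der2 in h2.
have {h2} : s.[1] = 0.
  by move/eqP: h2; rewrite mulf_eq0 pnatr_eq0 /= => /eqP.
move/rootP/factor_theorem=> [t ht]; rewrite polyC1 in ht; subst s.
by rewrite -!mulrA -expr2 -exprS dvdp_mull.
Qed.
Lemma root2 p : p.[1] = 0 -> (p^`()).[1] = 0 -> exists q, p = q * ('X-1)^+2.
Proof.
move=> h0 h1.
have /factor_theorem [q hq] : root p 1 by apply/rootP.
rewrite polyC1 in hq; subst p.
rewrite der1 in h1.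
have /factor_theorem [s hs] : root q 1 by apply/rootP.
rewrite polyC1 in hs; subst q.
by exists s; rewrite -mulrA -expr2.
Qed.
End S.

Ltac dsimp := rewrite ?derivnS ?derivn0 ?(derivXn, derivMn, derivMNn, derivZ, derivD, derivN, derivB, derivM, derivX, derivC).
Ltac hsimp := rewrite !(hornerXn, hornerMn, hornerZ, hornerD, hornerN, hornerM, hornerX, hornerC, horner0) ?expr1n.
Ltac comp R k := rewrite /Npoly /Qpoly /Ppoly /alpha /beta /nR; dsimp; hsimp; rewrite !mulrS;
  let K := fresh "K" in let hK := fresh "hK" in let L := fresh "L" in
  set K := (k%:R : R); (have hK : 0 <= K by rewrite /K ler0n);
  (have L : forall x : R, x *+ k = x * K by move=> ?; rewrite /K mulr_natr);
  rewrite ?L; clearbody K; field; rewrite !lt0r_neq0 //; lra.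

Theorem lemma4p5 (R : realFieldType) (n : nat) (gamma delta : R) :
  (3 <= n)%N ->
  (* (1) the numerator has a zero of order at least 3 at 1 *)
  (('X - 1) ^+ 3 %| Npoly n gamma delta)
  (* (2) Q(1) = Q'(1) = 0, Q''(1) = 2, and Q has a zero of order exactly 2 at 1 *)
  /\ (Qpoly n gamma delta).[1] = 0
  /\ ((Qpoly n gamma delta)^`()).[1] = 0
  /\ ((Qpoly n gamma delta)^`(2)).[1] = 2
  /\ (('X - 1) ^+ 2 %| Qpoly n gamma delta)
  /\ ~~ (('X - 1) ^+ 3 %| Qpoly n gamma delta)
  (* removable singularity: N/D = A/B with B(1) <> 0 *)
  /\ (exists A B : {poly R},
        B.[1] != 0 /\ Npoly n gamma delta * B = Dpoly n gamma delta * A).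
Proof.
case: n => [|[|[|k]]] // _.
have N0 : (Npoly k.+3 gamma delta).[1] = 0 by comp R k.
have N1 : ((Npoly k.+3 gamma delta)^`()).[1] = 0 by comp R k.
have N2 : ((Npoly k.+3 gamma delta)^`(2)).[1] = 0 by comp R k.
have Q0 : (Qpoly k.+3 gamma delta).[1] = 0 by comp R k.
have Q1 : ((Qpoly k.+3 gamma delta)^`()).[1] = 0 by comp R k.
have Q2 : ((Qpoly k.+3 gamma delta)^`(2)).[1] = 2 by comp R k.
have hN := @root3 R _ N0 N1 N2.
have [q hq] := @root2 R _ Q0 Q1.
have hq1 : q.[1] = 1.
  move: Q2; rewrite hq der2 => /eqP; rewrite -subr_eq0 -{2}(mulr1 2) -mulrBr mulf_eq0 pnatr_eq0 /= subr_eq0 => /eqP //.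
split; first exact: hN.
do 3 (split; first by []).
split; first by rewrite hq dvdp_mulIr.
split.
  apply/negP => /dvdpP [s hs].
  by move: Q2; rewrite hs der3a => /eqP; rewrite eq_sym pnatr_eq0.
have /dvdpP [r hr] := hN.
exists (- r), ('X * q); split.
  by rewrite hornerM hornerX hq1 mul1r oner_neq0.
rewrite /Dpoly hr hq; ring.
Qed.
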